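(* Let $n\ge 2$ and let $\mathcal{A}$ be a connected cochain DG algebra whose underlying graded algebra $\mathcal{A}^{\#}$ is the $k$-algebra generated by degree-one elements $x_1,\dots,x_n$ subject to the relations $x_ix_j=-x_jx_i$ for all $1\le i<j\le n$. Then there is a matrix $M=(m_{ij})_{n\times n}\in M_n(k)$ such that $$\partial_{\mathcal{A}}(x_i)=\sum_{j=1}^n m_{ij}x_j^2\quad\text{for all } i=1,\dots,n,$$ i.e. $(\partial_{\mathcal{A}}(x_1),\dots,\partial_{\mathcal{A}}(x_n))^T=M\,(x_1^2,\dots,x_n^2)^T$; in particular the differential $\partial_{\mathcal{A}}$ is determined by $M$.
   Context: $k$ is an algebraically closed field of characteristic zero. A connected cochain DG algebra is a graded $k$-algebra $\mathcal{A}=\bigoplus_{i\ge 0}\mathcal{A}^i$ with $\mathcal{A}^0=k$, together with a $k$-linear map $\partial_{\mathcal{A}}$ of degree $+1$ with $\partial_{\mathcal{A}}^2=0$ satisfying the Leibniz rule $\partial_{\mathcal{A}}(ab)=\partial_{\mathcal{A}}(a)b+(-1)^{|a|}a\partial_{\mathcal{A}}(b)$ for homogeneous $a,b$. $\mathcal{A}^{\#}$ denotes the underlying graded algebra. Note that no relation is imposed on the squares $x_i^2$. *)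

(* Defs.v *)
From HB Require Import structures.
From mathcomp Require Import all_boot all_order all_algebra.
Set Implicit Arguments. Unset Strict Implicit. Unset Printing Implicit Defensive.
Import GRing.Theory.
Local Open Scope ring_scope.

Definition is_alg_morph (k : fieldType) (A B : algType k) (f : A -> B) : Prop :=
  [/\ forall a b, f (a + b) = f a + f b,
      forall (c : k) a, f (c *: a) = c *: f a,
      forall a b, f (a * b) = f a * f b
    & f 1 = 1].

Definition anticomm_gens (k : fieldType) (n : nat) (A : algType k)
    (x : 'I_n -> A) : Prop :=
  forall i j : 'I_n, (i < j)%N -> x i * x j = - (x j * x i).

(* (A, x) is the k-algebra generated by x_1..x_n subject only to the relations
   x_i x_j = - x_j x_i (i < j): i.e. it satisfies the universal property of
   this presentation. *)
Definition anticomm_presentation (k : fieldType) (n : nat) (A : algType k)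
    (x : 'I_n -> A) : Prop :=
  anticomm_gens x /\
  forall (B : algType k) (y : 'I_n -> B), anticomm_gens y ->
    exists f : A -> B,
      [/\ is_alg_morph f, forall i, f (x i) = y i
        & forall g : A -> B, is_alg_morph g -> (forall i, g (x i) = y i) ->
            forall a, g a = f a].

(* Degree-d component of the grading in which every x_i has degree one:
   the k-span of the words of length d in the generators. *)
Definition homog (k : fieldType) (n : nat) (A : algType k) (x : 'I_n -> A)
    (d : nat) (a : A) : Prop :=
  exists c : d.-tuple 'I_n -> k,
    a = \sum_(w : d.-tuple 'I_n) c w *: \prod_(i <- w) x i.

Definition is_dg_differential (k : fieldType) (n : nat) (A : algType k)
    (x : 'I_n -> A) (dA : A -> A) : Prop :=
  [/\ forall a b, dA (a + b) = dA a + dA b,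
      forall (c : k) a, dA (c *: a) = c *: dA a,
      forall d a, homog x d a -> homog x d.+1 (dA a),
      forall a, dA (dA a) = 0
    & forall d e a b, homog x d a -> homog x e b ->
        dA (a * b) = dA a * b + (-1) ^+ d * (a * dA b)].

(* Main.v *)
Require Import Defs.
From HB Require Import structures.
From mathcomp Require Import all_boot all_order all_algebra.
From mathcomp Require Import ring.
From Stdlib Require Import ClassicalEpsilon.
Import GRing.Theory.
Set Implicit Arguments. Unset Strict Implicit.
Local Open Scope ring_scope.

Section Mat2.
Variable k : fieldType.
Definition mk2 (a b c d : k) : 'M[k]_2 :=
  \matrix_(r, s) if val r == 0%N then (if val s == 0%N then a else b)
                 else (if val s == 0%N then c else d).

Ltac mk2t := apply/matrixP; case=> [[|[|//]] ?]; case=> [[|[|//]] ?]; rewrite !mxE;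
  rewrite /= ?big_ord_recr ?big_ord0 /= ?mxE /=; ring.

Lemma mk2_mul a b c d a' b' c' d' :
  mk2 a b c d * mk2 a' b' c' d' =
  mk2 (a * a' + b * c') (a * b' + b * d') (c * a' + d * c') (c * b' + d * d').
Proof. rewrite -mulmxE. mk2t. Qed.
Lemma mk2_add a b c d a' b' c' d' :
  mk2 a b c d + mk2 a' b' c' d' = mk2 (a + a') (b + b') (c + c') (d + d').
Proof. mk2t. Qed.
Lemma mk2_opp a b c d : - mk2 a b c d = mk2 (- a) (- b) (- c) (- d).
Proof. mk2t. Qed.
Lemma mk2_scale e a b c d : e *: mk2 a b c d = mk2 (e * a) (e * b) (e * c) (e * d).
Proof. mk2t. Qed.
Lemma mk2_0 : 0 = mk2 0 0 0 0.
Proof. mk2t. Qed.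
Lemma mk2_inj a b c d a' b' c' d' : mk2 a b c d = mk2 a' b' c' d' ->
  a = a' /\ b = b'.
Proof.
move=> /matrixP H; have := H ord0 ord0; have := H ord0 ord_max.
by rewrite !mxE /= => -> ->.
Qed.
End Mat2.

Section Tup.
Variables (n : nat) (V : nmodType).
Lemma sum_tuple1 (F : 1.-tuple 'I_n -> V) : \sum_w F w = \sum_p F [tuple p].
Proof.
rewrite (reindex (fun p : 'I_n => [tuple p])) //.
exists (fun w => tnth w ord0) => [p _ //|w _].
case: w => [[|a []] //= Hw]; apply: val_inj => /=. by rewrite /tnth.
Qed.
Lemma sum_tuple2 (F : 2.-tuple 'I_n -> V) :
  \sum_w F w = \sum_p \sum_q F [tuple p; q].
Proof.
rewrite pair_big /= (reindex (fun pq : 'I_n * 'I_n => [tuple pq.1; pq.2])) //.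
exists (fun w => (tnth w ord0, tnth w ord_max)) => [[p q] _ //|w _].
case: w => [[|a [|b []]] //= Hw]; apply: val_inj => /=. by rewrite /tnth.
Qed.
End Tup.

Section Main.
Variables (k : fieldType) (n : nat) (A : algType k) (x : 'I_n -> A).
Hypothesis h2 : (2%:R : k) != 0.

Lemma morph0 {B : algType k} {f : A -> B} : is_alg_morph f -> f 0 = 0.
Proof. by case=> _ fZ _ _; rewrite -(scale0r (0:A)) fZ scale0r. Qed.
Lemma morphN {B : algType k} {f : A -> B} : is_alg_morph f -> forall a, f (- a) = - f a.
Proof. by case=> _ fZ _ _ a; rewrite -scaleN1r fZ scaleN1r. Qed.
Lemma morph_sum {B : algType k} {f : A -> B} : is_alg_morph f ->
  forall (I : Type) (r : seq I) (F : I -> A), f (\sum_(i <- r) F i) = \sum_(i <- r) f (F i).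
Proof.
move=> hf I r F; elim: r => [|h r IH]; first by rewrite !big_nil (morph0 hf).
by case: hf => fD _ _ _; rewrite !big_cons fD IH.
Qed.

Lemma sum2pt (V : nmodType) (a b : 'I_n) (G : 'I_n -> V) : a != b ->
  (forall p, p != a -> p != b -> G p = 0) -> \sum_p G p = G a + G b.
Proof.
move=> hab H; rewrite (bigD1 a) //= (bigD1 b) 1?eq_sym //= big1 ?addr0 //.
by move=> p /andP [hpa hpb]; apply: H.
Qed.

Lemma sum_antisym (F : 'I_n -> 'I_n -> A) :
  (forall p q, p != q -> F q p = - F p q) ->
  \sum_p \sum_q F p q = \sum_p F p p.
Proof.
move=> H.
have -> : \sum_p \sum_q F p q = \sum_p F p p +
    \sum_p \sum_q (if q == p then 0 else F p q).
  rewrite -big_split; apply: eq_bigr => p _.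
  rewrite (bigD1 p) //= [in RHS](bigD1 p) //= eqxx add0r; congr (_ + _).
  by apply: eq_bigr => q /negbTE ->.
set S := \sum_p _.
suff -> : S = 0 by rewrite addr0.
have hS : S = - S.
  rewrite /S [LHS]exchange_big /= -sumrN; apply: eq_bigr => p _.
  rewrite -sumrN; apply: eq_bigr => q _.
  case: eqP => [->|/eqP hpq]; first by rewrite eqxx oppr0.
  by rewrite eq_sym (negbTE hpq) (H p q).
move/eqP: hS; rewrite -subr_eq0 opprK -mulr2n -scaler_nat scaler_eq0.
by case/orP => /eqP // h; move: h2; rewrite h eqxx.
Qed.
End Main.

Unset Implicit Arguments.

Theorem theorem2p1 (k : closedFieldType) (hk : [pchar k] =i pred0)
  (n : nat) (hn : (1 < n)%N) (A : algType k) (x : 'I_n -> A)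
  (hA : anticomm_presentation x) (dA : A -> A) (hd : is_dg_differential x dA) :
  exists M : 'M[k]_n,
    forall i : 'I_n, dA (x i) = \sum_(j < n) M i j *: (x j * x j).
Proof.
have h2 : (2%:R : k) != 0 by move/pcharf0P: hk => ->.
case: hA => hgen hU.
case: hd => dD dZ dH d2 dL.
have hac : forall i j, i != j -> x i * x j = - (x j * x i).
  move=> i j; rewrite neq_ltn => /orP [] h; first exact: hgen.
  by rewrite (hgen _ _ h) opprK.
have d0 : dA 0 = 0 by have := dZ 0 0; rewrite !scale0r.
have hx1 : forall i, homog x 1 (x i).
  move=> i; exists (fun w => if tnth w ord0 == i then 1 else 0).
  rewrite sum_tuple1; under eq_bigr => w _ do rewrite big_cons big_nil mulr1.
  rewrite (bigD1 i) //= [X in _ + X]big1.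
    by rewrite /tnth /= eqxx scale1r addr0.
  by move=> p /negbTE hp; rewrite /tnth /= hp scale0r.
have key : forall i j, i != j ->
    dA (x i) * x j - x i * dA (x j) + (dA (x j) * x i - x j * dA (x i)) = 0.
  move=> i j hij.
  have e1 := dL 1%N 1%N _ _ (hx1 i) (hx1 j).
  have e2 := dL 1%N 1%N _ _ (hx1 j) (hx1 i).
  rewrite expr1 !mulN1r in e1 e2.
  by rewrite -e1 -e2 -dD hac // addNr d0.
have hC : forall i, exists c : 2.-tuple 'I_n -> k,
    dA (x i) = \sum_p \sum_q c [tuple p; q] *: (x p * x q).
  move=> i; case: (dH 1%N _ (hx1 i)) => c ->; exists c.
  rewrite sum_tuple2; apply: eq_bigr => p _; apply: eq_bigr => q _.
  by rewrite !big_cons big_nil mulr1.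
pose C i p q := (proj1_sig (constructive_indefinite_description _ (hC i))) [tuple p; q].
have hCe : forall i, dA (x i) = \sum_p \sum_q C i p q *: (x p * x q).
  move=> i; exact: (proj2_sig (constructive_indefinite_description _ (hC i))).
have sym : forall i a b, a != b -> C i a b = C i b a.
  move=> i a b hab.
  pose s1 : 'M[k]_2 := mk2 1 0 0 (-1).
  pose s2 : 'M[k]_2 := mk2 0 1 1 0.
  pose y l := if l == a then s1 else if l == b then s2 else 0.
  have ya : y a = s1 by rewrite /y eqxx.
  have yb : y b = s2 by rewrite /y eq_sym (negbTE hab) eqxx.
  have y0 : forall l, l != a -> l != b -> y l = 0.
    by move=> l /negbTE h1 /negbTE h3; rewrite /y h1 h3.
  have s12 : s1 * s2 = - (s2 * s1).
    by rewrite /s1 /s2 !mk2_mul mk2_opp; congr mk2; ring.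
  have hy : anticomm_gens y.
    move=> l m hlm; have hne : l != m by apply/eqP => e; rewrite e ltnn in hlm.
    case: (eqVneq l a) => [el|nla]; case: (eqVneq m a) => [em|nma].
    - by rewrite el em eqxx in hne.
    - case: (eqVneq m b) => [em'|nmb]; first by rewrite el em' ya yb.
      by rewrite (y0 m) // mulr0 mul0r oppr0.
    - case: (eqVneq l b) => [el'|nlb]; first by rewrite el' em ya yb s12 opprK.
      by rewrite (y0 l) // mulr0 mul0r oppr0.
    - case: (eqVneq l b) => [el'|nlb]; last by rewrite (y0 l) // mul0r mulr0 oppr0.
      have nmb : m != b by rewrite -el' eq_sym.
      by rewrite (y0 m) // mul0r mulr0 oppr0.
  case: (hU _ y hy) => f [hf hfx _].
  have [fD fZ fM f1] := hf.
  have Df : forall j, f (dA (x j)) = mk2 (C j a a + C j b b) (C j a b - C j b a)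
                                        (C j b a - C j a b) (C j a a + C j b b).
    move=> j; rewrite hCe (morph_sum hf).
    under eq_bigr => p _ do rewrite (morph_sum hf).
    under eq_bigr => p _ do under eq_bigr => q _ do rewrite fZ fM !hfx.
    rewrite (sum2pt hab); last first.
      by move=> p hpa hpb; rewrite big1 // => q _; rewrite (y0 p) // mul0r scaler0.
    have z : forall p, \sum_q C j p q *: (y p * y q) =
                       C j p a *: (y p * y a) + C j p b *: (y p * y b).
      by move=> p; rewrite (sum2pt hab) // => q hqa hqb; rewrite (y0 q) // mulr0 scaler0.
    rewrite !z ya yb /s1 /s2 !mk2_mul !mk2_scale !mk2_add; congr mk2; ring.
  have hk2 : forall i' j, i' != j -> f (dA (x i')) * y j - y i' * f (dA (x j)) +
      (f (dA (x j)) * y i' - y j * f (dA (x i'))) = 0.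
    move=> i' j hij; have := congr1 f (key i' j hij).
    by rewrite (morph0 hf) !fD !(morphN hf) !fM !hfx.
  apply/eqP; rewrite -subr_eq0; apply/eqP.
  case: (eqVneq i a) => [ia|nia].
    subst i.
    have := hk2 a b hab; rewrite !Df ya yb /s1 /s2 !mk2_mul !mk2_opp !mk2_add mk2_0.
    move=> /mk2_inj [e00 _].
    have : 2%:R * (C a a b - C a b a) = 0 by rewrite -e00; ring.
    by move/eqP; rewrite mulf_eq0 (negbTE h2) /= => /eqP.
  case: (eqVneq i b) => [ib|nib].
    subst i.
    have := hk2 b a (nia); rewrite !Df ya yb /s1 /s2 !mk2_mul !mk2_opp !mk2_add mk2_0.
    move=> /mk2_inj [_ e01].
    have : - (2%:R * (C b a b - C b b a)) = 0 by rewrite -e01; ring.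
    move/eqP; rewrite oppr_eq0 => /eqP.
    by move/eqP; rewrite mulf_eq0 (negbTE h2) /= => /eqP.
  have := hk2 i a nia; rewrite !Df ya (y0 i nia nib) /s1 mk2_0 !mk2_mul !mk2_opp !mk2_add.
  move=> /mk2_inj [_ e01].
  have : - (2%:R * (C i a b - C i b a)) = 0 by rewrite -e01; ring.
    move/eqP; rewrite oppr_eq0 => /eqP.
  by move/eqP; rewrite mulf_eq0 (negbTE h2) /= => /eqP.
exists (\matrix_(i, j) C i j j) => i; rewrite hCe.
under [RHS]eq_bigr => j _ do rewrite mxE.
apply: sum_antisym => // p q hpq.
have hqp : q != p by rewrite eq_sym.
by rewrite (sym i q p hqp) (hac _ _ hqp) scalerN.
Qed.
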